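(* Consider the nearly-elastic two-well model described in the context, started at a point $x=(q_0,p_0)$, and let $X^\varepsilon_t=(q^\varepsilon(t),p^\varepsilon(t))$ be its trajectory and $\widetilde X^\varepsilon_t=X^\varepsilon_{t/\varepsilon}$. Within each edge of the graph $\Gamma$, as $\varepsilon\downarrow0$, the energy $H(\widetilde X^\varepsilon_t)=\frac{(p^\varepsilon(t/\varepsilon))^2}{2}$ converges uniformly (on bounded time intervals during which the motion stays in that edge) to the deterministic motion $H(t)$ satisfying $$\frac{dH}{dt}=-2\frac{c_1(\sqrt{2H})+c_2(\sqrt{2H})}{T_3(H)}H,\ H(0)=H_0,\ \text{on } I_3;\qquad \frac{dH}{dt}=-2\frac{c_1(\sqrt{2H})+c_3(\sqrt{2H})}{T_1(H)}H\ \text{on } I_1;\qquad \frac{dH}{dt}=-2\frac{c_2(\sqrt{2H})+c_3(\sqrt{2H})}{T_2(H)}H\ \text{on } I_2,$$ where $H_0=p_0^2/2$, $T_3(H)=\frac{2(a_1+a_2)}{\sqrt{2H}}$, $T_1(H)=\frac{2a_1}{\sqrt{2H}}$, $T_2(H)=\frac{2a_2}{\sqrt{2H}}$ are the periods of the elastic motion with energy $H$ for the respective edges.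
   Context: Two-well nearly-elastic model. Fix $a_1,a_2>0$ and $H(O)>0$. Phase space $\sqcap=\{(q,p)\in\mathbb{R}^2:-a_1\le q\le a_2\}$, energy $H(q,p)=p^2/2$. A unit-mass particle moves freely; with energy $>H(O)$ it moves in $[-a_1,a_2]$ reflecting at $q=-a_1$ and $q=a_2$; with energy $\le H(O)$ it is confined to the well $\mathcal E_1=[-a_1,0]$ or $\mathcal E_2=[0,a_2]$ in which it is, reflecting at both ends. If it hits $q=-a_1$, $q=a_2$, or the interior wall $q=0$ with speed $v$, it is reflected with speed $v(1-\varepsilon c_1(v))$, $v(1-\varepsilon c_2(v))$, $v(1-\varepsilon c_3(v))$ respectively, where $c_1,c_2,c_3$ are positive smooth functions and $0<\varepsilon\ll1$. The graph $\Gamma$ (points of $\sqcap$ in the same connected component of a level set of $H$ identified) has interior vertex $O$ at energy $H(O)$ and edges $I_3$ (energy $>H(O)$), $I_1$ (energy $<H(O)$ in $\mathcal E_1$), $I_2$ (energy $<H(O)$ in $\mathcal E_2$). *)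

(* Defs.v *)
From Stdlib Require Import Reals Lra ClassicalEpsilon.
From Coquelicot Require Import Coquelicot.
Open Scope R_scope.

Definition energy (z : R * R) : R := (snd z) ^ 2 / 2.

Definition smooth_pos (c : R -> R) : Prop :=
  (forall v, 0 < v -> 0 < c v) /\ (forall (n : nat) v, 0 < v -> ex_derive_n c n v).

(** State (t,q,p): time t of the last event, position q and momentum p just
    after it.  The current mode is decided by the (constant between events)
    energy: energy > hO -> whole interval [-a1,a2]; energy <= hO -> the well
    containing the particle (at q = 0 it is in well 1 iff p < 0, i.e. it
    is moving into well 1).  The particle flies freely to the next wall it
    meets and is reflected there, its speed v being multiplied by
    (1 - eps c_i(v)), c_1 at -a1, c_2 at a2, c_3 at the interior wall 0.
    If p = 0 the particle is at rest forever (we just advance time by 1). *)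
Definition step (a1 a2 hO : R) (c1 c2 c3 : R -> R) (eps : R)
  (s : R * R * R) : R * R * R :=
  let '(t, q, p) := s in
  if Req_EM_T p 0 then (t + 1, q, p) else
  let big : bool := if Rle_dec (p ^ 2 / 2) hO then false else true in
  let well1 : bool :=
    if Rlt_dec q 0 then true
    else if Req_EM_T q 0 then (if Rlt_dec p 0 then true else false)
    else false in
  let L : R := if big then - a1 else if well1 then - a1 else 0 in
  let cL : R -> R := if big then c1 else if well1 then c1 else c3 in
  let Rw : R := if big then a2 else if well1 then 0 else a2 in
  let cR : R -> R := if big then c2 else if well1 then c3 else c2 in
  if Rlt_dec 0 p
  then (t + (Rw - q) / p, Rw, - p * (1 - eps * cR p))
  else (t + (L - q) / p, L, - p * (1 - eps * cL (- p))).

Fixpoint event (a1 a2 hO : R) (c1 c2 c3 : R -> R) (eps : R) (x : R * R)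
  (n : nat) : R * R * R :=
  match n with
  | O => (0, fst x, snd x)
  | S n => step a1 a2 hO c1 c2 c3 eps (event a1 a2 hO c1 c2 c3 eps x n)
  end.

Definition ev_time (s : R * R * R) : R := fst (fst s).

(** The trajectory X^eps_t = (q^eps(t), p^eps(t)) started at x: free motion
    between consecutive events.  (Junk value (0,0) at times not covered by
    an event interval, e.g. t < 0.) *)
Definition traj (a1 a2 hO : R) (c1 c2 c3 : R -> R) (eps : R) (x : R * R)
  (t : R) : R * R :=
  let ev := event a1 a2 hO c1 c2 c3 eps x in
  match excluded_middle_informative
          (exists k : nat, ev_time (ev k) <= t < ev_time (ev (S k))) with
  | left Hex =>
      let k := proj1_sig (constructive_indefinite_description _ Hex) in
      let '(tk, qk, pk) := ev k in (qk + pk * (t - tk), pk)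
  | right _ => (0, 0)
  end.

Inductive edge := I1 | I2 | I3.

Definition T1 (a1 h : R) : R := 2 * a1 / sqrt (2 * h).
Definition T2 (a2 h : R) : R := 2 * a2 / sqrt (2 * h).
Definition T3 (a1 a2 h : R) : R := 2 * (a1 + a2) / sqrt (2 * h).

Definition limit_rhs (a1 a2 : R) (c1 c2 c3 : R -> R) (e : edge) (h : R) : R :=
  match e with
  | I3 => - 2 * (c1 (sqrt (2 * h)) + c2 (sqrt (2 * h))) / T3 a1 a2 h * h
  | I1 => - 2 * (c1 (sqrt (2 * h)) + c3 (sqrt (2 * h))) / T1 a1 h * h
  | I2 => - 2 * (c2 (sqrt (2 * h)) + c3 (sqrt (2 * h))) / T2 a2 h * h
  end.

Definition in_edge (hO : R) (e : edge) (h : R) : Prop :=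
  match e with
  | I3 => hO < h
  | I1 | I2 => 0 < h < hO
  end.

Definition starts_in_edge (hO q0 p0 : R) (e : edge) : Prop :=
  in_edge hO e (p0 ^ 2 / 2) /\
  match e with
  | I3 => True
  | I1 => q0 < 0 \/ (q0 = 0 /\ p0 < 0)
  | I2 => 0 < q0 \/ (q0 = 0 /\ 0 < p0)
  end.

(* Main.v *)
Require Import Defs.
From Stdlib Require Import Reals Lra Lia ClassicalEpsilon.
From Coquelicot Require Import Coquelicot.
Open Scope R_scope.

Definition Lw (a1 a2 : R) e := match e with I3 => -a1 | I1 => -a1 | I2 => 0 end.
Definition Rw (a1 a2 : R) e := match e with I3 => a2 | I1 => 0 | I2 => a2 end.
Definition cLe (c1 c2 c3 : R -> R) e := match e with I3 => c1 | I1 => c1 | I2 => c3 end.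
Definition cRe (c1 c2 c3 : R -> R) e := match e with I3 => c2 | I1 => c3 | I2 => c2 end.
Definition mode_ok hO e p := match e with I3 => hO < p^2/2 | _ => p^2/2 <= hO end.
Definition well_ok e q p := match e with I3 => True
  | I1 => q < 0 \/ (q = 0 /\ p < 0) | I2 => 0 < q \/ (q = 0 /\ 0 < p) end.

Ltac stepsolve p q hm hw :=
  destruct (Req_EM_T p 0); [lra|];
  destruct (Rle_dec (p^2/2) _) as [r|r]; unfold mode_ok in hm; try lra; simpl;
  destruct (Rlt_dec 0 p); try lra;
  destruct (Rlt_dec q 0); try reflexivity;
  destruct (Req_dec_T q 0); try (destruct (Rlt_dec p 0)); try reflexivity;
  first [lra | exfalso; destruct hw as [?|[? ?]]; lra].

Lemma step_pos a1 a2 hO c1 c2 c3 eps e t q p :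
  0 < a1 -> 0 < a2 -> 0 < p -> mode_ok hO e p -> well_ok e q p ->
  step a1 a2 hO c1 c2 c3 eps (t,q,p) =
  (t + (Rw a1 a2 e - q)/p, Rw a1 a2 e, - p * (1 - eps * cRe c1 c2 c3 e p)).
Proof.
  intros h1 h2 hp hm hw. unfold step.
  destruct e; stepsolve p q hm hw.
Qed.

Lemma step_neg a1 a2 hO c1 c2 c3 eps e t q p :
  0 < a1 -> 0 < a2 -> p < 0 -> mode_ok hO e p -> well_ok e q p ->
  step a1 a2 hO c1 c2 c3 eps (t,q,p) =
  (t + (Lw a1 a2 e - q)/p, Lw a1 a2 e, - p * (1 - eps * cLe c1 c2 c3 e (-p))).
Proof.
  intros h1 h2 hp hm hw. unfold step.
  destruct e; stepsolve p q hm hw.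
Qed.

Lemma divnn_pos x y : 0 <= x -> 0 < y -> 0 <= x / y.
Proof. intros; unfold Rdiv; apply Rmult_le_pos; [lra| left; apply Rinv_0_lt_compat; lra]. Qed.
Lemma divnn_neg x y : x <= 0 -> y < 0 -> 0 <= x / y.
Proof. intros. replace (x/y) with ((-x)/(-y)) by (field; lra). apply divnn_pos; lra. Qed.

Lemma step_mono a1 a2 hO c1 c2 c3 eps t q p :
  0 < a1 -> 0 < a2 -> -a1 <= q <= a2 ->
  t <= ev_time (step a1 a2 hO c1 c2 c3 eps (t,q,p)) /\
  -a1 <= snd (fst (step a1 a2 hO c1 c2 c3 eps (t,q,p))) <= a2.
Proof.
  intros h1 h2 hq. unfold step, ev_time.
  destruct (Req_EM_T p 0); [simpl; lra|].
  destruct (Rle_dec (p^2/2) hO); destruct (Rlt_dec q 0); try destruct (Req_dec_T q 0);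
  try destruct (Rlt_dec p 0); destruct (Rlt_dec 0 p); simpl; split; try lra;
  match goal with |- _ <= _ + ?x / ?y =>
    first [assert (0 <= x / y) by (apply divnn_pos; lra)
          | assert (0 <= x / y) by (apply divnn_neg; lra)]; lra end.
Qed.

Lemma event_mono a1 a2 hO c1 c2 c3 eps x :
  0 < a1 -> 0 < a2 -> -a1 <= fst x <= a2 ->
  forall n, -a1 <= snd (fst (event a1 a2 hO c1 c2 c3 eps x n)) <= a2 /\
    ev_time (event a1 a2 hO c1 c2 c3 eps x n) <= ev_time (event a1 a2 hO c1 c2 c3 eps x (S n)).
Proof.
  intros h1 h2 hx. induction n.
  - simpl. destruct (step_mono a1 a2 hO c1 c2 c3 eps 0 (fst x) (snd x) h1 h2 hx).
    split; auto.
  - simpl. destruct (event a1 a2 hO c1 c2 c3 eps x n) as [[t q] p] eqn:E.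
    simpl in IHn. destruct IHn as [Hq _].
    destruct (step_mono a1 a2 hO c1 c2 c3 eps t q p h1 h2 Hq) as [_ Hq'].
    destruct (step a1 a2 hO c1 c2 c3 eps (t,q,p)) as [[t' q'] p'].
    simpl in Hq'. destruct (step_mono a1 a2 hO c1 c2 c3 eps t' q' p' h1 h2 Hq'); auto.
Qed.

Lemma event_mono_le a1 a2 hO c1 c2 c3 eps x :
  0 < a1 -> 0 < a2 -> -a1 <= fst x <= a2 ->
  forall m n, (m <= n)%nat ->
  ev_time (event a1 a2 hO c1 c2 c3 eps x m) <= ev_time (event a1 a2 hO c1 c2 c3 eps x n).
Proof.
  intros h1 h2 hx m n Hmn. induction Hmn. lra.
  destruct (event_mono a1 a2 hO c1 c2 c3 eps x h1 h2 hx m0). lra.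
Qed.


Lemma smooth_lip c lo hi : smooth_pos c -> 0 < lo -> lo <= hi ->
  exists Lc C, 0 <= Lc /\ 0 <= C /\
   (forall x y, lo <= x <= hi -> lo <= y <= hi -> Rabs (c x - c y) <= Lc * Rabs (x - y)) /\
   (forall x, lo <= x <= hi -> 0 < c x <= C).
Proof.
  intros [Hp Hd] Hlo Hlh.
  assert (HD : forall v, 0 < v -> continuity_pt (Derive c) v).
  { intros v hv. apply continuity_pt_filterlim. exact (ex_derive_continuous (Derive c) v (Hd 2%nat v hv)). }
  assert (Hc : forall v, 0 < v -> is_derive c v (Derive c v)).
  { intros v hv. apply Derive_correct. exact (Hd 1%nat v hv). }
  assert (Hcc : forall v, 0 < v -> continuity_pt c v).
  { intros v hv. apply continuity_pt_filterlim. exact (ex_derive_continuous c v (Hd 1%nat v hv)). }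
  destruct (continuity_ab_maj (Derive c) lo hi Hlh) as [Mx [HM HMx]].
  { intros z hz. apply HD. lra. }
  destruct (continuity_ab_min (Derive c) lo hi Hlh) as [mx [Hm Hmx]].
  { intros z hz. apply HD. lra. }
  set (Lc := Rmax (Rabs (Derive c Mx)) (Rabs (Derive c mx))).
  assert (HL : forall z, lo <= z <= hi -> Rabs (Derive c z) <= Lc).
  { intros z hz. specialize (HM z hz). specialize (Hm z hz). unfold Lc.
    apply Rabs_le.
    pose proof (Rmax_l (Rabs (Derive c Mx)) (Rabs (Derive c mx))).
    pose proof (Rmax_r (Rabs (Derive c Mx)) (Rabs (Derive c mx))).
    pose proof (Rle_abs (Derive c Mx)).
    pose proof (Rle_abs (- Derive c mx)). rewrite Rabs_Ropp in H2. lra. }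
  assert (HLc : 0 <= Lc) by (unfold Lc; eapply Rle_trans; [apply Rabs_pos| apply Rmax_l]).
  assert (Hlip : forall x y, lo <= x <= hi -> lo <= y <= hi -> Rabs (c x - c y) <= Lc * Rabs (x - y)).
  { intros x y hx hy.
    destruct (MVT_gen c x y (Derive c)) as [z [hz Hz]].
    - intros w hw. apply Hc. pose proof (Rmin_glb_lt lo x y).
      assert (lo <= Rmin x y) by (apply Rmin_glb; lra). lra.
    - intros w hw. apply Hcc.
      assert (lo <= Rmin x y) by (apply Rmin_glb; lra). lra.
    - assert (hz' : lo <= z <= hi).
      { assert (lo <= Rmin x y) by (apply Rmin_glb; lra).
        assert (Rmax x y <= hi) by (apply Rmax_lub; lra). lra. }
      replace (c x - c y) with (- (c y - c x)) by ring. rewrite Hz, Rabs_Ropp, Rabs_mult.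
      replace (Rabs (y - x)) with (Rabs (x - y)) by (rewrite <- Rabs_Ropp; f_equal; ring).
      apply Rmult_le_compat_r; [apply Rabs_pos| apply HL; auto]. }
  exists Lc, (c lo + Lc * (hi - lo)). split; [auto|]. split.
  { pose proof (Hp lo Hlo). pose proof (Rmult_le_pos Lc (hi - lo) HLc ltac:(lra)). lra. }
  split; [auto|].
  intros x hx. split; [apply Hp; lra|].
  specialize (Hlip x lo hx ltac:(lra)). 
  rewrite (Rabs_right (x - lo)) in Hlip by lra.
  pose proof (Rle_abs (c x - c lo)).
  pose proof (Rmult_le_compat_l Lc (x - lo) (hi - lo) HLc ltac:(lra)). lra.
Qed.


Definition Gf (a b : R -> R) Ln v := -(a v + b v) * v^2 / (2*Ln).

Lemma abs_mul_le x y X Y : Rabs x <= X -> Rabs y <= Y -> Rabs (x*y) <= X*Y.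
Proof. intros. rewrite Rabs_mult. apply Rmult_le_compat; auto; apply Rabs_pos. Qed.

Lemma G_lip a b Ln vlo vhi Lc C x y :
  0 < Ln -> 0 < vlo -> 0 <= Lc -> 0 <= C ->
  (forall x y, vlo <= x <= vhi -> vlo <= y <= vhi -> Rabs (a x - a y) <= Lc * Rabs (x - y)) ->
  (forall x y, vlo <= x <= vhi -> vlo <= y <= vhi -> Rabs (b x - b y) <= Lc * Rabs (x - y)) ->
  (forall x, vlo <= x <= vhi -> 0 < a x <= C) ->
  (forall x, vlo <= x <= vhi -> 0 < b x <= C) ->
  vlo <= x <= vhi -> vlo <= y <= vhi ->
  Rabs (Gf a b Ln x - Gf a b Ln y) <= (Lc*vhi^2 + 2*C*vhi)/Ln * Rabs (x - y).
Proof.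
  intros HL Hv HLc HC Ha Hb Ha' Hb' hx hy.
  set (d := Rabs (x - y)).
  assert (HP : Rabs ((a x - a y + (b x - b y)) * x^2) <= (2*Lc*d) * vhi^2).
  { apply abs_mul_le.
    - eapply Rle_trans; [apply Rabs_triang|]. pose proof (Ha x y hx hy); pose proof (Hb x y hx hy).
      fold d in H, H0. lra.
    - rewrite Rabs_right by (apply Rle_ge; apply pow2_ge_0).
      apply pow_incr; lra. }
  assert (HQ : Rabs ((a y + b y) * (x^2 - y^2)) <= (2*C) * (2*vhi*d)).
  { apply abs_mul_le.
    - pose proof (Ha' y hy); pose proof (Hb' y hy). rewrite Rabs_right by lra. lra.
    - replace (x^2 - y^2) with ((x-y)*(x+y)) by ring. rewrite Rabs_mult.
      rewrite (Rabs_right (x+y)) by lra. fold d. 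
      pose proof (Rabs_pos (x-y)). fold d in H. nra. }
  assert (E : Gf a b Ln x - Gf a b Ln y =
    - ((a x - a y + (b x - b y)) * x^2 + (a y + b y) * (x^2 - y^2)) / (2*Ln)).
  { unfold Gf. field. lra. }
  rewrite E. unfold Rdiv. rewrite Rabs_mult, Rabs_Ropp.
  rewrite (Rabs_right (/ (2*Ln))) by (apply Rle_ge; left; apply Rinv_0_lt_compat; lra).
  pose proof (Rabs_triang ((a x - a y + (b x - b y)) * x^2) ((a y + b y) * (x^2 - y^2))).
  apply (Rle_trans _ ((2 * Lc * d * vhi ^ 2 + 2 * C * (2 * vhi * d)) * / (2*Ln))).
  - apply Rmult_le_compat_r; [left; apply Rinv_0_lt_compat; lra| lra].
  - right. field. lra.
Qed.

Lemma G_bound a b Ln vlo vhi C x :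
  0 < Ln -> 0 < vlo -> 0 <= C ->
  (forall x, vlo <= x <= vhi -> 0 < a x <= C) ->
  (forall x, vlo <= x <= vhi -> 0 < b x <= C) ->
  vlo <= x <= vhi -> Rabs (Gf a b Ln x) <= C*vhi^2/Ln.
Proof.
  intros HL Hv HC Ha Hb hx. unfold Gf.
  pose proof (Ha x hx); pose proof (Hb x hx).
  replace (- (a x + b x) * x ^ 2 / (2 * Ln)) with (- ((a x + b x) * x^2 / (2*Ln))) by (field; lra).
  rewrite Rabs_Ropp. rewrite Rabs_right.
  - apply (Rle_trans _ ((2*C) * vhi^2 / (2*Ln))).
    + unfold Rdiv. apply Rmult_le_compat_r; [left; apply Rinv_0_lt_compat; lra|].
      apply Rmult_le_compat; try lra. apply pow2_ge_0. apply pow_incr; lra.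
    + right; field; lra.
  - apply Rle_ge. unfold Rdiv. apply Rmult_le_pos;
    [apply Rmult_le_pos; [lra|apply pow2_ge_0] | left; apply Rinv_0_lt_compat; lra].
Qed.

Lemma deriv_lip f df T M :
  (forall t, 0 <= t <= T -> is_derive f t (df t)) ->
  (forall t, 0 <= t <= T -> Rabs (df t) <= M) ->
  forall x y, 0 <= x <= T -> 0 <= y <= T -> Rabs (f x - f y) <= M * Rabs (x - y).
Proof.
  intros Hd HM x y hx hy.
  assert (Hmin : 0 <= Rmin y x) by (apply Rmin_glb; lra).
  assert (Hmax : Rmax y x <= T) by (apply Rmax_lub; lra).
  destruct (MVT_gen f y x df) as [z [hz Hz]].
  - intros w hw. apply Hd. lra.
  - intros w hw. apply continuity_pt_filterlim.
    apply (ex_derive_continuous f w). exists (df w). apply Hd. lra.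
  - rewrite Hz, Rabs_mult. apply Rmult_le_compat_r; [apply Rabs_pos|]. apply HM. lra.
Qed.

Lemma taylor1 u G T K M s D :
  (forall t, 0 <= t <= T -> is_derive u t (G (u t))) ->
  (forall t, 0 <= t <= T -> Rabs (G (u t)) <= M) ->
  (forall t1 t2, 0 <= t1 <= T -> 0 <= t2 <= T -> Rabs (G (u t1) - G (u t2)) <= K * Rabs (u t1 - u t2)) ->
  0 <= K -> 0 <= s -> 0 <= D -> s + D <= T ->
  Rabs (u (s + D) - u s - G (u s) * D) <= K * M * D^2.
Proof.
  intros Hd HM HK HK0 hs hD hT.
  destruct (MVT_gen u s (s+D) (fun t => G (u t))) as [z [hz Hz]].
  - intros w hw. apply Hd. rewrite Rmin_left in hw by lra. rewrite Rmax_right in hw by lra. lra.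
  - intros w hw. rewrite Rmin_left in hw by lra. rewrite Rmax_right in hw by lra.
    apply continuity_pt_filterlim.
    apply (ex_derive_continuous u w). exists (G (u w)). apply Hd. lra.
  - rewrite Rmin_left in hz by lra. rewrite Rmax_right in hz by lra.
    rewrite Hz. replace (G (u z) * (s + D - s) - G (u s) * D) with ((G (u z) - G (u s)) * D) by ring.
    rewrite Rabs_mult, (Rabs_right D) by lra.
    assert (H1 : Rabs (u z - u s) <= M * Rabs (z - s)).
    { apply (deriv_lip u (fun t => G (u t)) T M); auto; lra. }
    rewrite (Rabs_right (z - s)) in H1 by lra.
    pose proof (HK z s ltac:(lra) ltac:(lra)).
    assert (Rabs (G (u z) - G (u s)) <= K * (M * D)).
    { eapply Rle_trans; [apply H|]. apply Rmult_le_compat_l; auto.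
      eapply Rle_trans; [apply H1|]. apply Rmult_le_compat_l; [|lra].
      pose proof (HM s ltac:(lra)); pose proof (Rabs_pos (G (u s))); lra. }
    replace (K * M * D^2) with ((K*(M*D))*D) by ring.
    apply Rmult_le_compat_r; lra.
Qed.

Lemma pair_err a b Ln vlo vhi Lc C eps v :
  0 < Ln -> 0 < vlo -> 0 <= Lc -> 0 <= C ->
  (forall x y, vlo <= x <= vhi -> vlo <= y <= vhi -> Rabs (a x - a y) <= Lc * Rabs (x - y)) ->
  (forall x, vlo <= x <= vhi -> 0 < a x <= C) ->
  (forall x, vlo <= x <= vhi -> 0 < b x <= C) ->
  vlo <= v <= vhi -> vlo <= v * (1 - eps * b v) -> 0 < eps -> eps * C <= 1/2 ->
  Rabs (v * (1 - eps * b v) * (1 - eps * a (v * (1 - eps * b v))) - v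
        - Gf a b Ln v * (eps * Ln * (1/v + 1/(v * (1 - eps * b v)))))
   <= eps^2 * (Lc*C*vhi^2 + 3*C^2*vhi).
Proof.
  intros HL Hv HLc HC Ha Ha' Hb' hv hv' he heC.
  set (bb := b v) in *. set (aa := a v).
  set (v' := v * (1 - eps * bb)) in *.
  set (a' := a v').
  pose proof (Hb' v hv) as Hbb. fold bb in Hbb.
  pose proof (Ha' v hv) as Haa. fold aa in Haa.
  assert (Hepsb : eps * bb <= 1/2) by (pose proof (Rmult_le_compat_l eps bb C ltac:(lra) ltac:(lra)); lra).
  assert (Hv'v : v' <= v) by (unfold v'; pose proof (Rmult_le_pos eps bb ltac:(lra) ltac:(lra)); nra).
  assert (hv'w : vlo <= v' <= vhi) by lra.
  pose proof (Ha' v' hv'w) as Ha'a. fold a' in Ha'a.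
  assert (E : v' * (1 - eps * a') - v - Gf a b Ln v * (eps * Ln * (1 / v + 1 / v'))
     = eps*v*(aa - a') + eps^2*bb*a'*v + eps^2*(aa+bb)*v*bb/(2*(1-eps*bb))).
  { unfold v', Gf. fold aa bb. field. split; lra. }
  rewrite E.
  assert (H1 : Rabs (eps*v*(aa - a')) <= eps^2 * (Lc*C*vhi^2)).
  { rewrite Rabs_mult, (Rabs_right (eps*v)) by nra.
    assert (Rabs (aa - a') <= Lc * (eps * C * vhi)).
    { eapply Rle_trans; [apply Ha; auto|]. apply Rmult_le_compat_l; auto.
      unfold v'. replace (v - v * (1 - eps * bb)) with (eps*bb*v) by ring.
      rewrite Rabs_right by (apply Rle_ge; repeat apply Rmult_le_pos; lra).
      apply Rmult_le_compat; try lra.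
      apply Rmult_le_pos; lra. apply Rmult_le_compat_l; lra. }
    apply (Rle_trans _ (eps*vhi*(Lc*(eps*C*vhi)))).
    - apply Rmult_le_compat; try nra. apply Rabs_pos.
    - right; ring. }
  assert (H2 : Rabs (eps^2*bb*a'*v) <= eps^2 * (C^2*vhi)).
  { rewrite Rabs_right by (apply Rle_ge; repeat apply Rmult_le_pos; nra).
    replace (eps^2*bb*a'*v) with (eps^2*(bb*a'*v)) by ring.
    apply Rmult_le_compat_l; [nra|].
    replace (C^2*vhi) with (C*C*vhi) by ring.
    apply Rmult_le_compat; try nra. }
  assert (H3 : Rabs (eps^2*(aa+bb)*v*bb/(2*(1-eps*bb))) <= eps^2 * (2*C^2*vhi)).
  { assert (P : 0 <= eps^2*(aa+bb)*v*bb) by (apply Rmult_le_pos; [apply Rmult_le_pos|]; nra).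
    rewrite Rabs_right by (apply Rle_ge; apply Rmult_le_pos; [auto| left; apply Rinv_0_lt_compat; lra]).
    apply (Rle_trans _ (eps^2*(aa+bb)*v*bb)).
    - unfold Rdiv. rewrite <- (Rmult_1_r (eps ^ 2 * (aa + bb) * v * bb)) at 2.
      apply Rmult_le_compat_l; auto.
      rewrite <- Rinv_1. apply Rinv_le_contravar; lra.
    - replace (eps^2*(aa+bb)*v*bb) with (eps^2*((aa+bb)*v*bb)) by ring.
      apply Rmult_le_compat_l; [nra|].
      replace (2*C^2*vhi) with ((2*C)*vhi*C) by ring.
      apply Rmult_le_compat; try nra. }
  pose proof (Rabs_triang (eps*v*(aa - a') + eps^2*bb*a'*v) (eps^2*(aa+bb)*v*bb/(2*(1-eps*bb)))).
  pose proof (Rabs_triang (eps*v*(aa - a')) (eps^2*bb*a'*v)).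
  lra.
Qed.

Lemma gron_step e e' E0 C1 eps K x D :
  0 <= K -> 0 <= x -> 0 <= D -> 0 <= E0 -> 0 <= C1 * eps ->
  Rabs e <= (E0 + C1*eps*x) * exp (K*x) ->
  Rabs e' <= Rabs e * (1 + K*D) + C1*eps*D ->
  Rabs e' <= (E0 + C1*eps*(x+D)) * exp (K*(x+D)).
Proof.
  intros HK hx hD hE hC he he'.
  assert (X1 : 1 + K*D <= exp (K*D)) by apply exp_ineq1_le.
  assert (X2 : exp (K*(x+D)) = exp (K*x) * exp (K*D)) by (rewrite <- exp_plus; f_equal; ring).
  assert (X3 : 1 <= exp (K*(x+D))).
  { pose proof (exp_ineq1_le (K*(x+D))). assert (0 <= K*(x+D)) by nra. lra. }
  assert (X4 : 0 < exp (K*x)) by apply exp_pos.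
  assert (0 <= C1*eps*x) by nra.
  assert (Y1 : Rabs e * (1 + K*D) <= (E0 + C1*eps*x) * exp (K*(x+D))).
  { rewrite X2. apply (Rle_trans _ ((E0 + C1*eps*x) * exp (K*x) * (1 + K*D))).
    - apply Rmult_le_compat_r; [nra| auto].
    - rewrite Rmult_assoc. apply Rmult_le_compat_l; [lra|].
      apply Rmult_le_compat_l; lra. }
  assert (Y2 : C1*eps*D <= C1*eps*D*exp (K*(x+D))).
  { rewrite <- (Rmult_1_r (C1*eps*D)) at 1. apply Rmult_le_compat_l; [nra|lra]. }
  nra.
Qed.

Lemma dpos x y : 0 <= x -> 0 < y -> 0 <= x / y.
Proof. intros; unfold Rdiv; apply Rmult_le_pos; [lra| left; apply Rinv_0_lt_compat; lra]. Qed.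

Lemma Rabs_minus_le x y : Rabs (x - y) <= Rabs x + Rabs y.
Proof. unfold Rminus. rewrite <- (Rabs_Ropp y). apply Rabs_triang. Qed.

Definition Kc Ln vhi Lc C := (Lc*vhi^2 + 2*C*vhi)/Ln.
Definition Mc Ln vhi C := C*vhi^2/Ln.
Definition C1c Ln vlo vhi Lc C :=
  (Lc*C*vhi^2 + 3*C^2*vhi)*vhi/Ln + 2*Kc Ln vhi Lc C*Mc Ln vhi C*Ln/vlo.

Lemma mono0 (S : nat -> R) : (forall j, S j <= S (Datatypes.S j)) -> forall j, S 0%nat <= S j.
Proof. intros H j; induction j; [lra| specialize (H j); lra]. Qed.

Lemma core a b Ln vlo vhi r Lc C T u eps (V S : nat -> R) (Good : nat -> Prop) E0 :
  0 < Ln -> 0 < vlo -> 0 < r -> 0 <= Lc -> 0 <= C -> 0 <= T ->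
  (forall x y, vlo <= x <= vhi -> vlo <= y <= vhi -> Rabs (a x - a y) <= Lc * Rabs (x - y)) ->
  (forall x y, vlo <= x <= vhi -> vlo <= y <= vhi -> Rabs (b x - b y) <= Lc * Rabs (x - y)) ->
  (forall x, vlo <= x <= vhi -> 0 < a x <= C) ->
  (forall x, vlo <= x <= vhi -> 0 < b x <= C) ->
  (forall t, 0 <= t <= T -> is_derive u t (Gf a b Ln (u t))) ->
  (forall t, 0 <= t <= T -> vlo + r <= u t <= vhi - r) ->
  0 < eps -> eps*C <= 1/2 -> eps*C*vhi <= r/2 ->
  Good 0%nat -> 0 <= S 0%nat -> S 0%nat <= T -> Rabs (V 0%nat - u (S 0%nat)) <= E0 ->
  (E0 + C1c Ln vlo vhi Lc C*eps*T)*exp(Kc Ln vhi Lc C*T) <= r/2 ->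
  (forall j, S j <= S (Datatypes.S j)) ->
  (forall j, Good j -> vlo <= V j -> vlo <= V j * (1 - eps * b (V j)) -> V j <= V 0%nat ->
      Good (Datatypes.S j) /\
      V (Datatypes.S j) = V j*(1-eps*b(V j))*(1 - eps*a(V j*(1-eps*b(V j)))) /\
      S (Datatypes.S j) = S j + eps*Ln*(1/V j + 1/(V j*(1-eps*b(V j))))) ->
  forall j, S j <= T -> Good j /\ vlo + r/2 <= V j <= V 0%nat /\
    Rabs (V j - u (S j)) <= (E0 + C1c Ln vlo vhi Lc C*eps*(S j - S 0%nat))
                             *exp(Kc Ln vhi Lc C*(S j - S 0%nat)).
Proof.
  intros HL Hv Hr HLc HC HT Ha Hb Ha' Hb' Hu Huw he heC heCv HG0 HS0 HS0T HE0 HEsmall Hmon Hrec.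
  pose proof (Huw 0 ltac:(lra)) as Hu0.
  assert (Hvhi : 0 < vhi) by lra.
  assert (HK : 0 <= Kc Ln vhi Lc C).
  { unfold Kc. apply dpos; [|lra]. pose proof (pow2_ge_0 vhi). nra. }
  assert (HM : 0 <= Mc Ln vhi C).
  { unfold Mc. apply dpos; [|lra]. pose proof (pow2_ge_0 vhi). nra. }
  set (K := Kc Ln vhi Lc C) in *. set (M := Mc Ln vhi C) in *.
  assert (HC1 : 0 <= C1c Ln vlo vhi Lc C).
  { unfold C1c. fold K M. apply Rplus_le_le_0_compat; apply dpos; try lra.
    - apply Rmult_le_pos; [|lra]. pose proof (pow2_ge_0 vhi).
      apply Rplus_le_le_0_compat; repeat apply Rmult_le_pos; lra.
    - clearbody K M. repeat apply Rmult_le_pos; lra. }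
  set (C1 := C1c Ln vlo vhi Lc C) in *.
  assert (HE0p : 0 <= E0) by (pose proof (Rabs_pos (V 0%nat - u (S 0%nat))); lra).
  assert (Hexp1 : 1 <= exp (K*T)).
  { pose proof (exp_ineq1_le (K*T)). assert (0 <= K*T) by nra. lra. }
  assert (HE0r : E0 <= r/2).
  { assert (0 <= C1*eps*T) by (repeat apply Rmult_le_pos; lra). nra. }
  assert (HS0j := mono0 S Hmon).
  assert (HV0 : vlo + r/2 <= V 0%nat <= vhi - r/2).
  { 
    pose proof (Huw (S 0%nat) ltac:(lra)).
    apply Rabs_le_between' in HE0. lra. }
  assert (HGM : forall t, 0 <= t <= T -> Rabs (Gf a b Ln (u t)) <= M).
  { intros t ht. pose proof (Huw t ht). unfold M, Mc.
    apply (G_bound a b Ln vlo vhi C); auto; lra. }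
  assert (HGK : forall x y, vlo <= x <= vhi -> vlo <= y <= vhi ->
     Rabs (Gf a b Ln x - Gf a b Ln y) <= K * Rabs (x - y)).
  { intros x y hx hy. unfold K, Kc. apply (G_lip a b Ln vlo vhi Lc C); auto. }
  induction j as [|j IH]; intros HSj.
  - split; [auto|]. split; [lra|].
    rewrite Rminus_diag, !Rmult_0_r, exp_0. lra.
  - assert (HSj' : S j <= T) by (specialize (Hmon j); lra).
    destruct (IH HSj') as [Gj [[Vlo Vhi] Ej]].
    set (v := V j) in *.
    assert (hv : vlo <= v <= vhi) by lra.
    pose proof (Hb' v hv) as Hbv.
    assert (hv' : vlo <= v * (1 - eps * b v)).
    { assert (eps * b v * v <= eps*C*vhi).
      { apply Rmult_le_compat; try lra. apply Rmult_le_pos; lra.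
        apply Rmult_le_compat_l; lra. }
      nra. }
    destruct (Hrec j Gj (proj1 hv) hv' Vhi) as [G' [EV ES]].
    fold v in EV, ES.
    set (v' := v * (1 - eps * b v)) in *.
    assert (Hv'v : v' <= v).
    { unfold v'. assert (0 <= eps * b v) by (apply Rmult_le_pos; lra). nra. }
    assert (hv'w : vlo <= v' <= vhi) by lra.
    pose proof (Ha' v' hv'w) as Hav'.
    assert (Hepsa : eps * a v' <= 1/2).
    { pose proof (Rmult_le_compat_l eps (a v') C ltac:(lra) ltac:(lra)). lra. }
    assert (HV1 : V (Datatypes.S j) <= v').
    { rewrite EV. assert (0 <= eps * a v') by (apply Rmult_le_pos; lra). nra. }
    split; [auto|].
    set (s := S j) in *. set (D := S (Datatypes.S j) - s).
    assert (HSD : S (Datatypes.S j) = s + D) by (unfold D; ring).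
    assert (HD : D = eps*Ln*(1/v + 1/v')) by (unfold D; rewrite ES; ring).
    assert (Hs0 : 0 <= s) by (pose proof (HS0j j); unfold s; lra).
    assert (HDup : D <= 2*eps*Ln/vlo).
    { rewrite HD. assert (1/v <= 1/vlo) by (apply Rmult_le_compat_l; [lra| apply Rinv_le_contravar; lra]).
      assert (1/v' <= 1/vlo) by (apply Rmult_le_compat_l; [lra| apply Rinv_le_contravar; lra]).
      replace (2*eps*Ln/vlo) with (eps*Ln*(1/vlo + 1/vlo)) by (field; lra).
      apply Rmult_le_compat_l; [nra|lra]. }
    assert (HDlo : eps*Ln/vhi <= D).
    { rewrite HD. assert (1/vhi <= 1/v) by (apply Rmult_le_compat_l; [lra| apply Rinv_le_contravar; lra]).
      assert (0 < 1/v') by (apply Rdiv_lt_0_compat; lra).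
      replace (eps*Ln/vhi) with (eps*Ln*(1/vhi)) by (field; lra).
      apply Rmult_le_compat_l; [nra|lra]. }
    assert (HD0 : 0 <= D).
    { assert (0 <= eps*Ln/vhi) by (apply dpos; nra). lra. }
    assert (E1 : Rabs (V (Datatypes.S j) - v - Gf a b Ln v * D) <= eps^2 * (Lc*C*vhi^2 + 3*C^2*vhi)).
    { rewrite EV, HD. unfold v'. apply (pair_err a b Ln vlo vhi Lc C eps v); auto. }
    assert (E2 : Rabs (u (s + D) - u s - Gf a b Ln (u s) * D) <= K * M * D^2).
    { apply (taylor1 u (Gf a b Ln) T K M s D); auto; try lra.
      intros t1 t2 h1 h2. apply HGK; pose proof (Huw t1 h1); pose proof (Huw t2 h2); lra. }
    assert (E3 : Rabs (Gf a b Ln v - Gf a b Ln (u s)) <= K * Rabs (v - u s)).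
    { apply HGK; auto. pose proof (Huw s ltac:(lra)); lra. }
    assert (Hsplit : V (Datatypes.S j) - u (S (Datatypes.S j)) =
       (V (Datatypes.S j) - v - Gf a b Ln v * D) + (v - u s)
       + (Gf a b Ln v - Gf a b Ln (u s)) * D - (u (s + D) - u s - Gf a b Ln (u s) * D)).
    { rewrite HSD. ring. }
    assert (Hbound : Rabs (V (Datatypes.S j) - u (S (Datatypes.S j))) <=
                     Rabs (v - u s) * (1 + K*D) + C1*eps*D).
    { rewrite Hsplit.
      set (e := v - u s) in *.
      pose proof (Rabs_minus_le ((V (Datatypes.S j) - v - Gf a b Ln v * D) + e
         + (Gf a b Ln v - Gf a b Ln (u s)) * D) ((u (s + D) - u s - Gf a b Ln (u s) * D))).
      pose proof (Rabs_triang ((V (Datatypes.S j) - v - Gf a b Ln v * D) + e)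
         ((Gf a b Ln v - Gf a b Ln (u s)) * D)).
      pose proof (Rabs_triang (V (Datatypes.S j) - v - Gf a b Ln v * D) e).
      assert (Rabs ((Gf a b Ln v - Gf a b Ln (u s)) * D) <= K * Rabs e * D).
      { rewrite Rabs_mult, (Rabs_right D) by lra. apply Rmult_le_compat_r; lra. }
      assert (X1 : eps^2 * (Lc*C*vhi^2 + 3*C^2*vhi) <= eps * ((Lc*C*vhi^2 + 3*C^2*vhi)*vhi/Ln) * D).
      { assert (0 <= Lc*C*vhi^2 + 3*C^2*vhi).
        { pose proof (pow2_ge_0 vhi). apply Rplus_le_le_0_compat; repeat apply Rmult_le_pos; lra. }
        assert (eps <= vhi/Ln * D).
        { apply (Rmult_le_reg_l (Ln/vhi)). apply Rdiv_lt_0_compat; lra.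
          replace (Ln / vhi * (vhi / Ln * D)) with D by (field; lra).
          replace (Ln/vhi*eps) with (eps*Ln/vhi) by (field; lra). lra. }
        replace (eps * ((Lc * C * vhi ^ 2 + 3 * C ^ 2 * vhi) * vhi / Ln) * D)
          with (eps * (Lc * C * vhi ^ 2 + 3 * C ^ 2 * vhi) * (vhi/Ln*D)) by (field; lra).
        replace (eps^2 * (Lc*C*vhi^2 + 3*C^2*vhi)) with (eps * (Lc*C*vhi^2 + 3*C^2*vhi) * eps) by ring.
        apply Rmult_le_compat_l; [apply Rmult_le_pos; lra| lra]. }
      assert (X2 : K * M * D^2 <= eps * (2*K*M*Ln/vlo) * D).
      { replace (K*M*D^2) with ((K*M*D)*D) by ring.
        apply Rmult_le_compat_r; [lra|].
        replace (eps * (2*K*M*Ln/vlo)) with (K*M*(2*eps*Ln/vlo)) by (field; lra).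
        apply Rmult_le_compat_l; [nra| lra]. }
      assert (X3 : C1*eps*D = eps * ((Lc*C*vhi^2 + 3*C^2*vhi)*vhi/Ln) * D + eps * (2*K*M*Ln/vlo) * D).
      { unfold C1, C1c. fold K M. field. lra. }
      lra. }
    assert (Hx : 0 <= s - S 0%nat) by (unfold s; pose proof (HS0j j); lra).
    pose proof (gron_step (v - u s) _ E0 C1 eps K (s - S 0%nat) D HK Hx HD0 HE0p
       ltac:(apply Rmult_le_pos; lra) Ej Hbound) as Herr.
    replace (s - S 0%nat + D) with (S (Datatypes.S j) - S 0%nat) in Herr by (rewrite HSD; ring).
    split; [|exact Herr]. split; [|lra].
    assert (HB : (E0 + C1 * eps * (S (Datatypes.S j) - S 0%nat)) * exp (K * (S (Datatypes.S j) - S 0%nat))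
                 <= r/2).
    { eapply Rle_trans; [|exact HEsmall].
      apply Rmult_le_compat.
      - pose proof (HS0j (Datatypes.S j)). assert (0 <= C1*eps*(S (Datatypes.S j) - S 0%nat)).
        { apply Rmult_le_pos; [apply Rmult_le_pos|]; lra. } lra.
      - left; apply exp_pos.
      - apply Rplus_le_compat_l. apply Rmult_le_compat_l; [apply Rmult_le_pos; lra| lra].
      - destruct (Rle_lt_or_eq_dec (K * (S (Datatypes.S j) - S 0%nat)) (K*T)).
        + apply Rmult_le_compat_l; lra.
        + left; apply exp_increasing; auto.
        + right; f_equal; auto. }
    pose proof (Huw (S (Datatypes.S j)) ltac:(pose proof (HS0j (Datatypes.S j)); lra)).
    apply Rabs_le_between' in Herr. lra.
Qed.


Definition Lnn a1 a2 e := Rw a1 a2 e - Lw a1 a2 e.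

Lemma wall_okL' a1 a2 e p : 0 < a1 -> 0 < p -> well_ok e (Lw a1 a2 e) p.
Proof. intros; destruct e; simpl; auto; lra. Qed.

Lemma wall_okR a1 a2 e p : 0 < a2 -> p < 0 -> well_ok e (Rw a1 a2 e) p.
Proof. intros; destruct e; simpl; auto; lra. Qed.

Lemma Lnn_pos a1 a2 e : 0 < a1 -> 0 < a2 -> 0 < Lnn a1 a2 e.
Proof. intros; destruct e; unfold Lnn; simpl; lra. Qed.

Lemma pairR a1 a2 hO c1 c2 c3 eps e t v :
  0 < a1 -> 0 < a2 -> 0 < v -> mode_ok hO e (-v) ->
  let v' := v * (1 - eps * cLe c1 c2 c3 e v) in
  0 < v' -> mode_ok hO e v' ->
  step a1 a2 hO c1 c2 c3 eps (t, Rw a1 a2 e, -v) = (t + Lnn a1 a2 e / v, Lw a1 a2 e, v') /\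
  step a1 a2 hO c1 c2 c3 eps (step a1 a2 hO c1 c2 c3 eps (t, Rw a1 a2 e, -v)) =
    (t + Lnn a1 a2 e / v + Lnn a1 a2 e / v', Rw a1 a2 e, - (v' * (1 - eps * cRe c1 c2 c3 e v'))).
Proof.
  intros h1 h2 hv hm v' hv' hm'.
  assert (E1 : step a1 a2 hO c1 c2 c3 eps (t, Rw a1 a2 e, -v) = (t + Lnn a1 a2 e / v, Lw a1 a2 e, v')).
  { rewrite (step_neg a1 a2 hO c1 c2 c3 eps e); auto; try lra; try (apply (wall_okR a1 a2 e); auto; lra).
    unfold v', Lnn. rewrite Ropp_involutive. f_equal; try f_equal; try ring; try (field; lra). }
  split; auto. rewrite E1. rewrite (step_pos a1 a2 hO c1 c2 c3 eps e); auto; try (apply (wall_okL' a1 a2 e); auto).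
  unfold Lnn. f_equal; try f_equal; try ring; try (field; lra).
Qed.

Lemma pairL a1 a2 hO c1 c2 c3 eps e t v :
  0 < a1 -> 0 < a2 -> 0 < v -> mode_ok hO e v ->
  let v' := v * (1 - eps * cRe c1 c2 c3 e v) in
  0 < v' -> mode_ok hO e (-v') ->
  step a1 a2 hO c1 c2 c3 eps (t, Lw a1 a2 e, v) = (t + Lnn a1 a2 e / v, Rw a1 a2 e, -v') /\
  step a1 a2 hO c1 c2 c3 eps (step a1 a2 hO c1 c2 c3 eps (t, Lw a1 a2 e, v)) =
    (t + Lnn a1 a2 e / v + Lnn a1 a2 e / v', Lw a1 a2 e, v' * (1 - eps * cLe c1 c2 c3 e v')).
Proof.
  intros h1 h2 hv hm v' hv' hm'.
  assert (E1 : step a1 a2 hO c1 c2 c3 eps (t, Lw a1 a2 e, v) = (t + Lnn a1 a2 e / v, Rw a1 a2 e, -v')).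
  { rewrite (step_pos a1 a2 hO c1 c2 c3 eps e); auto; try (apply (wall_okL' a1 a2 e); auto).
    unfold v', Lnn. f_equal; try f_equal; try ring; try (field; lra). }
  split; auto. rewrite E1. rewrite (step_neg a1 a2 hO c1 c2 c3 eps e); auto; try lra; try (apply (wall_okR a1 a2 e); auto; lra).
  unfold Lnn. rewrite Ropp_involutive. f_equal; try f_equal; try ring; try (field; lra).
Qed.

Definition W1f a1 a2 e (pos : bool) := if pos then Rw a1 a2 e else Lw a1 a2 e.
Definition W2f a1 a2 e (pos : bool) := if pos then Lw a1 a2 e else Rw a1 a2 e.
Definition Pf (pos : bool) x := if pos then -x else x.
Definition Pnf (pos : bool) x := if pos then x else -x.
Definition af c1 c2 c3 e (pos : bool) := if pos then cRe c1 c2 c3 e else cLe c1 c2 c3 e.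
Definition bf c1 c2 c3 e (pos : bool) := if pos then cLe c1 c2 c3 e else cRe c1 c2 c3 e.

Lemma pair_gen a1 a2 hO c1 c2 c3 eps e pos t v :
  0 < a1 -> 0 < a2 -> 0 < v -> mode_ok hO e v -> mode_ok hO e (-v) ->
  let v' := v * (1 - eps * bf c1 c2 c3 e pos v) in
  0 < v' -> mode_ok hO e v' -> mode_ok hO e (-v') ->
  step a1 a2 hO c1 c2 c3 eps (t, W1f a1 a2 e pos, Pf pos v) =
     (t + Lnn a1 a2 e / v, W2f a1 a2 e pos, Pnf pos v') /\
  step a1 a2 hO c1 c2 c3 eps (step a1 a2 hO c1 c2 c3 eps (t, W1f a1 a2 e pos, Pf pos v)) =
     (t + Lnn a1 a2 e / v + Lnn a1 a2 e / v', W1f a1 a2 e pos,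
      Pf pos (v' * (1 - eps * af c1 c2 c3 e pos v'))).
Proof.
  intros h1 h2 hv hm hm' v' hv' hm1 hm2. destruct pos; simpl in *.
  - apply pairR; auto.
  - apply pairL; auto.
Qed.

Lemma first_gen a1 a2 hO c1 c2 c3 eps e pos q0 p0 :
  0 < a1 -> 0 < a2 -> p0 <> 0 -> pos = (if Rlt_dec 0 p0 then true else false) ->
  mode_ok hO e p0 -> well_ok e q0 p0 ->
  step a1 a2 hO c1 c2 c3 eps (0, q0, p0) =
   (0 + (W1f a1 a2 e pos - q0)/p0, W1f a1 a2 e pos,
    Pf pos (Rabs p0 * (1 - eps * af c1 c2 c3 e pos (Rabs p0)))).
Proof.
  intros h1 h2 hp hpos hm hw. destruct (Rlt_dec 0 p0) as [hl|hl]; subst pos; unfold W1f, Pf, af.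
  - rewrite (step_pos a1 a2 hO c1 c2 c3 eps e); auto. rewrite Rabs_right by lra. f_equal; ring.
  - rewrite (step_neg a1 a2 hO c1 c2 c3 eps e); auto; [|lra]. rewrite Rabs_left by lra. reflexivity.
Qed.


Lemma crossing (f : nat -> R) x : f 0%nat <= x -> forall N, x < f N ->
  exists k, f k <= x < f (S k).
Proof.
  intros H0 N. induction N; intros HN; [lra|].
  destruct (Rle_lt_dec (f N) x) as [h|h].
  - exists N; split; auto.
  - apply IHN; auto.
Qed.

Lemma traj_energy a1 a2 hO c1 c2 c3 eps x s :
  (exists k, ev_time (event a1 a2 hO c1 c2 c3 eps x k) <= s < ev_time (event a1 a2 hO c1 c2 c3 eps x (S k))) ->
  exists k, ev_time (event a1 a2 hO c1 c2 c3 eps x k) <= s < ev_time (event a1 a2 hO c1 c2 c3 eps x (S k)) /\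
    energy (traj a1 a2 hO c1 c2 c3 eps x s) = (snd (event a1 a2 hO c1 c2 c3 eps x k))^2/2.
Proof.
  intros Hex. unfold traj.
  destruct (excluded_middle_informative _) as [H|H]; [|contradiction].
  destruct (constructive_indefinite_description _ H) as [k Hk]. simpl.
  exists k. split; auto.
  destruct (event a1 a2 hO c1 c2 c3 eps x k) as [[tk qk] pk]. reflexivity.
Qed.

Lemma sq_diff x y vhi : 0 <= x <= vhi -> 0 <= y <= vhi -> Rabs (x^2/2 - y^2/2) <= vhi * Rabs (x - y).
Proof.
  intros hx hy. replace (x^2/2 - y^2/2) with ((x - y) * ((x + y)/2)) by field.
  rewrite Rabs_mult, (Rabs_right ((x+y)/2)) by lra. rewrite (Rmult_comm vhi).
  apply Rmult_le_compat_l; [apply Rabs_pos| lra].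
Qed.

Lemma lim_G a1 a2 c1 c2 c3 e h : 0 < a1 -> 0 < a2 -> 0 < h ->
  2 * limit_rhs a1 a2 c1 c2 c3 e h / (2 * sqrt (2 * h)) =
  Gf (cLe c1 c2 c3 e) (cRe c1 c2 c3 e) (Lnn a1 a2 e) (sqrt (2*h)).
Proof.
  intros h1 h2 hh.
  assert (hw : 0 < sqrt (2*h)) by (apply sqrt_lt_R0; lra).
  assert (hw2 : sqrt (2*h) * sqrt (2*h) = 2*h) by (apply sqrt_sqrt; lra).
  set (w := sqrt (2*h)) in *.
  unfold Gf, Lnn. destruct e; simpl; unfold T1, T2, T3; fold w; clearbody w;
  replace h with (w*w/2) by lra; field; lra.
Qed.

Lemma u_deriv (Hs : R -> R) t L : is_derive Hs t L -> 0 < Hs t ->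
  is_derive (fun t => sqrt (2 * Hs t)) t (2*L/(2*sqrt(2*Hs t))).
Proof.
  intros H hp.
  exact (is_derive_sqrt (fun x => 2 * Hs x) t (2*L) (is_derive_scal Hs t 2 L H) ltac:(simpl; lra)).
Qed.

Lemma smooth_cL c1 c2 c3 e : smooth_pos c1 -> smooth_pos c2 -> smooth_pos c3 -> smooth_pos (cLe c1 c2 c3 e).
Proof. intros; destruct e; simpl; auto. Qed.
Lemma smooth_cR c1 c2 c3 e : smooth_pos c1 -> smooth_pos c2 -> smooth_pos c3 -> smooth_pos (cRe c1 c2 c3 e).
Proof. intros; destruct e; simpl; auto. Qed.

Lemma Gf_comm a b Ln v : Gf a b Ln v = Gf b a Ln v.
Proof. unfold Gf. rewrite (Rplus_comm (a v)). reflexivity. Qed.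

Lemma small_mul eps X w : 0 < eps -> 0 <= X -> 0 < w -> eps < w/(X+1) -> eps*X < w.
Proof.
  intros he hX hw H. apply (Rmult_lt_compat_r (X+1)) in H; [|lra].
  replace (w/(X+1)*(X+1)) with w in H by (field; lra). nra.
Qed.

Lemma Rmin_lt4 x a b c d : x < Rmin (Rmin a b) (Rmin c d) -> x < a /\ x < b /\ x < c /\ x < d.
Proof.
  intros H. pose proof (Rmin_l (Rmin a b) (Rmin c d)). pose proof (Rmin_r (Rmin a b) (Rmin c d)).
  pose proof (Rmin_l a b). pose proof (Rmin_r a b). pose proof (Rmin_l c d). pose proof (Rmin_r c d).
  lra.
Qed.

Lemma Pf_inv pos x : Pf pos (Pf pos x) = x.
Proof. destruct pos; simpl; ring. Qed.
Lemma Pf_sq pos x : (Pf pos x)^2 = x^2.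
Proof. destruct pos; simpl; ring. Qed.
Lemma Pnf_sq pos x : (Pnf pos x)^2 = x^2.
Proof. destruct pos; simpl; ring. Qed.

Lemma ev_time_triple (x y z : R) : ev_time (x, y, z) = x.
Proof. reflexivity. Qed.

Theorem lemma2p1 (a1 a2 hO : R) (c1 c2 c3 : R -> R) (q0 p0 : R) (e : edge)
  (T : R) (Hs : R -> R) :
  0 < a1 -> 0 < a2 -> 0 < hO ->
  smooth_pos c1 -> smooth_pos c2 -> smooth_pos c3 ->
  - a1 <= q0 <= a2 ->
  starts_in_edge hO q0 p0 e ->
  0 <= T ->
  Hs 0 = p0 ^ 2 / 2 ->
  (forall t, 0 <= t <= T ->
     is_derive Hs t (limit_rhs a1 a2 c1 c2 c3 e (Hs t)) /\ in_edge hO e (Hs t)) ->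
  forall delta, 0 < delta ->
  exists eps0, 0 < eps0 /\
    forall eps, 0 < eps < eps0 ->
    forall t, 0 <= t <= T ->
      Rabs (energy (traj a1 a2 hO c1 c2 c3 eps (q0, p0) (t / eps)) - Hs t) < delta.
Proof.
  intros Ha1 Ha2 HhO Hc1 Hc2 Hc3 Hq0 Hstart HT HHs0 Hode delta Hdelta.
  assert (Hpos : forall t, 0 <= t <= T -> 0 < Hs t).
  { intros t ht. destruct (Hode t ht) as [_ Hin]. destruct e; simpl in Hin; lra. }
  assert (Hcont : forall t, 0 <= t <= T -> continuity_pt Hs t).
  { intros t ht. apply continuity_pt_filterlim.
    apply (ex_derive_continuous Hs t). eexists. apply (Hode t ht). }
  destruct (continuity_ab_min Hs 0 T HT Hcont) as [tmin [Hmin Htmin]].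
  destruct (continuity_ab_maj Hs 0 T HT Hcont) as [tmax [Hmax Htmax]].
  set (hmin := Hs tmin) in *. set (hmax := Hs tmax) in *.
  set (u := fun t => sqrt (2 * Hs t)).
  set (umin := sqrt (2 * hmin)). set (umax := sqrt (2 * hmax)).
  assert (Hhmin : 0 < hmin) by (apply Hpos; auto).
  assert (Humin : 0 < umin) by (apply sqrt_lt_R0; lra).
  assert (Huw0 : forall t, 0 <= t <= T -> umin <= u t <= umax).
  { intros t ht. unfold u, umin, umax. split; apply sqrt_le_1_alt;
    [pose proof (Hmin t ht) | pose proof (Hmax t ht)]; lra. }
  assert (Hp0 : p0 <> 0).
  { destruct Hstart as [Hin _]. intro; subst p0. destruct e; simpl in Hin; lra. }
  assert (Hu0 : u 0 = Rabs p0).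
  { unfold u. rewrite HHs0. replace (2 * (p0^2/2)) with (p0^2) by field.
    rewrite <- sqrt_Rsqr_abs. unfold Rsqr. f_equal; ring. }
  set (r := match e with I3 => (umin - sqrt (2*hO))/2 | _ => umin/2 end).
  assert (Hr : 0 < r).
  { unfold r. destruct e; try lra.
    assert (hO < hmin) by (destruct (Hode tmin Htmin) as [_ Hin]; exact Hin).
    assert (sqrt (2*hO) < umin) by (apply sqrt_lt_1_alt; lra). lra. }
  assert (HI3 : e = I3 -> sqrt (2*hO) < umin).
  { intros ->. assert (hO < hmin) by (destruct (Hode tmin Htmin) as [_ Hin]; exact Hin).
    apply sqrt_lt_1_alt; lra. }
  set (vlo := umin - r). set (vhi := umax + r).
  assert (Evlo : vlo = umin - r) by reflexivity. assert (Evhi : vhi = umax + r) by reflexivity.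
  assert (Hvlo : 0 < vlo) by (unfold vlo, r; destruct e; try lra;
     pose proof (sqrt_pos (2*hO)); lra).
  assert (Hmode : forall v, vlo <= v <= Rabs p0 -> mode_ok hO e v /\ mode_ok hO e (-v)).
  { intros v hv.
    assert (Hv1 : mode_ok hO e v).
    { destruct Hstart as [Hin _]. destruct e; simpl in *.
      - assert (v^2 <= p0^2).
        { rewrite <- (pow2_abs p0). apply pow_incr; lra. } lra.
      - assert (v^2 <= p0^2).
        { rewrite <- (pow2_abs p0). apply pow_incr; lra. } lra.
      - assert (Hs2 : sqrt (2*hO) < v).
        { unfold vlo, r in hv. simpl in hv. specialize (HI3 eq_refl). lra. }
        pose proof (sqrt_pos (2*hO)).
        assert (sqrt (2*hO) ^2 < v^2) by nra.
        rewrite pow2_sqrt in H0 by lra. lra. }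
    split; auto. unfold mode_ok in *. replace ((-v)^2) with (v^2) by ring. auto. }
  set (cL := cLe c1 c2 c3 e). set (cR := cRe c1 c2 c3 e). set (Ln := Lnn a1 a2 e).
  assert (HLn : 0 < Ln) by (apply Lnn_pos; auto).
  set (pos := if Rlt_dec 0 p0 then true else false).
  set (a := af c1 c2 c3 e pos).
  set (b := bf c1 c2 c3 e pos).
  assert (Hsa : smooth_pos a) by (unfold a, af; destruct pos;
     [apply smooth_cR| apply smooth_cL]; auto).
  assert (Hsb : smooth_pos b) by (unfold b, bf; destruct pos;
     [apply smooth_cL| apply smooth_cR]; auto).
  assert (Humm : umin <= umax) by (pose proof (Huw0 0 ltac:(lra)); lra).
  assert (Hvv : vlo <= vhi) by (unfold vlo, vhi; lra).
  destruct (smooth_lip a vlo vhi Hsa Hvlo Hvv) as [La [Ca [HLa [HCa [Hlipa Hba]]]]].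
  destruct (smooth_lip b vlo vhi Hsb Hvlo Hvv) as [Lb [Cb [HLb [HCb [Hlipb Hbb]]]]].
  set (Lc := Rmax La Lb). set (C := Rmax Ca Cb).
  assert (HLc : 0 <= Lc) by (unfold Lc; eapply Rle_trans; [exact HLa| apply Rmax_l]).
  assert (HC : 0 <= C) by (unfold C; eapply Rle_trans; [exact HCa| apply Rmax_l]).
  assert (Hlipa' : forall x y, vlo <= x <= vhi -> vlo <= y <= vhi -> Rabs (a x - a y) <= Lc * Rabs (x - y)).
  { intros x y hx hy. eapply Rle_trans; [apply Hlipa; auto|]. apply Rmult_le_compat_r;
    [apply Rabs_pos| apply Rmax_l]. }
  assert (Hlipb' : forall x y, vlo <= x <= vhi -> vlo <= y <= vhi -> Rabs (b x - b y) <= Lc * Rabs (x - y)).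
  { intros x y hx hy. eapply Rle_trans; [apply Hlipb; auto|]. apply Rmult_le_compat_r;
    [apply Rabs_pos| apply Rmax_r]. }
  assert (Hba' : forall x, vlo <= x <= vhi -> 0 < a x <= C).
  { intros x hx. destruct (Hba x hx). split; auto. eapply Rle_trans; [eauto| apply Rmax_l]. }
  assert (Hbb' : forall x, vlo <= x <= vhi -> 0 < b x <= C).
  { intros x hx. destruct (Hbb x hx). split; auto. eapply Rle_trans; [eauto| apply Rmax_r]. }
  clear Hlipa Hlipb Hba Hbb.
  assert (Hu : forall t, 0 <= t <= T -> is_derive u t (Gf a b Ln (u t))).
  { intros t ht. destruct (Hode t ht) as [Hd _].
    pose proof (u_deriv Hs t _ Hd (Hpos t ht)) as H.
    rewrite lim_G in H by (auto; apply Hpos; auto).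
    assert (E : Gf a b Ln (u t) = Gf cL cR Ln (sqrt (2 * Hs t))).
    { unfold a, b, u, af, bf. destruct pos; [apply Gf_comm| reflexivity]. }
    rewrite E. exact H. }
  assert (Huw : forall t, 0 <= t <= T -> vlo + r <= u t <= vhi - r).
  { intros t ht. pose proof (Huw0 t ht). unfold vlo, vhi. lra. }
  set (K := Kc Ln vhi Lc C). set (M := Mc Ln vhi C). set (C1 := C1c Ln vlo vhi Lc C).
  assert (Hvhi : 0 < vhi) by lra.
  assert (HK : 0 <= K).
  { unfold K, Kc. apply dpos; [|lra]. pose proof (pow2_ge_0 vhi). nra. }
  assert (HM : 0 <= M).
  { unfold M, Mc. apply dpos; [|lra]. pose proof (pow2_ge_0 vhi). nra. }
  assert (HC1 : 0 <= C1).
  { unfold C1, C1c. fold K M. apply Rplus_le_le_0_compat; apply dpos; try lra.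
    - apply Rmult_le_pos; [|lra]. pose proof (pow2_ge_0 vhi).
      apply Rplus_le_le_0_compat; repeat apply Rmult_le_pos; lra.
    - clearbody K M. repeat apply Rmult_le_pos; lra. }
  set (E0c := C*vhi + M*Ln/vlo).
  assert (HE0c : 0 <= E0c).
  { unfold E0c. assert (0 <= M*Ln/vlo) by (apply dpos; [nra|lra]). nra. }
  set (Z := (E0c + C1*T)*exp(K*T)).
  assert (HZ : 0 <= Z) by (unfold Z; apply Rmult_le_pos; [nra| left; apply exp_pos]).
  set (Q := vhi*(C*vhi + Z + 2*M*Ln/vlo)).
  assert (HQ : 0 <= Q).
  { unfold Q. assert (0 <= 2*M*Ln/vlo) by (apply dpos; [nra|lra]). nra. }
  exists (Rmin (Rmin ((1/2)/(C+1)) ((r/2)/(C*vhi+1))) (Rmin ((r/2)/(Z+1)) (delta/(Q+1)))).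
  split.
  { repeat apply Rmin_pos; apply Rdiv_lt_0_compat; nra. }
  intros eps [heps heps0] t ht.
  destruct (Rmin_lt4 _ _ _ _ _ heps0) as [he1 [he2 [he3 he4]]].
  assert (heC : eps*C <= 1/2) by (left; apply small_mul; auto; lra).
  assert (heCv : eps*C*vhi <= r/2).
  { left. rewrite Rmult_assoc. apply small_mul; auto; [nra|lra]. }
  assert (heZ : eps*Z <= r/2) by (left; apply small_mul; auto; lra).
  assert (heQ : eps*Q < delta) by (apply small_mul; auto).
  set (ev := event a1 a2 hO c1 c2 c3 eps (q0,p0)).
  set (V := fun j => Pf pos (snd (ev (2*j+1)%nat))).
  set (S := fun j => eps * ev_time (ev (2*j+1)%nat)).
  set (Good := fun j => ev (2*j+1)%nat = (ev_time (ev (2*j+1)%nat), W1f a1 a2 e pos, Pf pos (V j))).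
  set (v0 := Rabs p0).
  assert (Hv0 : v0 = u 0) by (rewrite Hu0; reflexivity).
  assert (Hv0w : umin <= v0 <= umax) by (rewrite Hv0; apply Huw0; lra).
  assert (Hv0p : 0 < v0) by lra.
  assert (Hm0 : mode_ok hO e p0).
  { destruct Hstart as [Hin _]. destruct e; simpl in *; lra. }
  assert (Hw0 : well_ok e q0 p0).
  { destruct Hstart as [_ Hw]. destruct e; simpl in *; auto. }
  assert (Hq0w : Lw a1 a2 e <= q0 <= Rw a1 a2 e).
  { destruct Hstart as [_ Hw]. destruct e; simpl in *; auto; lra. }
  assert (Hev1 : ev 1%nat = (0 + (W1f a1 a2 e pos - q0)/p0, W1f a1 a2 e pos,
                   Pf pos (v0 * (1 - eps * a v0)))).
  { unfold ev. simpl. apply first_gen; auto. }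
  assert (HV0 : V 0%nat = v0 * (1 - eps * a v0)).
  { unfold V. simpl (2*0+1)%nat. rewrite Hev1. simpl snd. apply Pf_inv. }
  assert (HG0 : Good 0%nat).
  { unfold Good. simpl (2*0+1)%nat. rewrite HV0. rewrite Hev1. reflexivity. }
  assert (HS0b : 0 <= S 0%nat <= eps*Ln/v0).
  { unfold S. simpl (2*0+1)%nat. rewrite Hev1. unfold ev_time; simpl fst.
    assert (0 <= (W1f a1 a2 e pos - q0) / p0 <= Ln/v0).
    { unfold W1f, pos, v0, Ln, Lnn. destruct (Rlt_dec 0 p0) as [hp|hp].
      - rewrite Rabs_right by lra. split; [apply dpos; lra|].
        unfold Rdiv; apply Rmult_le_compat_r; [left; apply Rinv_0_lt_compat; lra| lra].
      - rewrite Rabs_left by lra.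
        replace ((Lw a1 a2 e - q0) / p0) with ((q0 - Lw a1 a2 e)/(-p0)) by (field; lra).
        split; [apply dpos; lra|].
        unfold Rdiv; apply Rmult_le_compat_r; [left; apply Rinv_0_lt_compat; lra| lra]. }
    replace (eps * (0 + (W1f a1 a2 e pos - q0) / p0)) with (eps * ((W1f a1 a2 e pos - q0) / p0)) by ring.
    replace (eps*Ln/v0) with (eps*(Ln/v0)) by (field; lra).
    split; [apply Rmult_le_pos; lra| apply Rmult_le_compat_l; lra]. }
  assert (Hav0 : 0 < a v0) by (destruct Hsa as [Hsa' _]; apply Hsa'; lra).
  assert (HV0le : V 0%nat <= v0).
  { rewrite HV0. assert (0 <= eps * a v0) by (apply Rmult_le_pos; lra). nra. }
  assert (Hmon : forall j, S j <= S (Datatypes.S j)).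
  { intros j. unfold S. apply Rmult_le_compat_l; [lra|].
    apply event_mono_le; auto; simpl; lia. }
  assert (Hrec : forall j, Good j -> vlo <= V j -> vlo <= V j * (1 - eps * b (V j)) -> V j <= V 0%nat ->
      Good (Datatypes.S j) /\
      V (Datatypes.S j) = V j*(1-eps*b(V j))*(1 - eps*a(V j*(1-eps*b(V j)))) /\
      S (Datatypes.S j) = S j + eps*Ln*(1/V j + 1/(V j*(1-eps*b(V j))))).
  { intros j Gj h1 h2 h3.
    assert (Hvj : V j <= v0) by lra.
    set (v := V j) in *.
    set (v' := v * (1 - eps * b v)) in *.
    assert (Hbv : 0 < b v) by (destruct Hsb as [Hsb' _]; apply Hsb'; lra).
    assert (Hv'v : v' <= v) by (unfold v'; assert (0 <= eps * b v) by (apply Rmult_le_pos; lra); nra).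
    destruct (Hmode v) as [m1 m2]; [lra|].
    destruct (Hmode v') as [m3 m4]; [lra|].
    destruct (pair_gen a1 a2 hO c1 c2 c3 eps e pos (ev_time (ev (2*j+1)%nat)) v Ha1 Ha2
        ltac:(lra) m1 m2 ltac:(fold b v'; lra) m3 m4) as [P1 P2].
    fold b v' in P1, P2. fold a in P2. fold Ln in P1, P2.
    assert (Eev : ev (2 * Datatypes.S j + 1)%nat = step a1 a2 hO c1 c2 c3 eps (step a1 a2 hO c1 c2 c3 eps (ev (2*j+1)%nat))).
    { replace (2 * Datatypes.S j + 1)%nat with (Datatypes.S (Datatypes.S (2*j+1))) by lia. reflexivity. }
    unfold Good in Gj. rewrite Gj in Eev. fold v in Eev. rewrite P2 in Eev.
    assert (EV : V (Datatypes.S j) = v' * (1 - eps * a v')).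
    { unfold V at 1. rewrite Eev. simpl snd. apply Pf_inv. }
    split; [|split; auto].
    - unfold Good. rewrite EV. rewrite Eev. reflexivity.
    - unfold S at 1. rewrite Eev. rewrite ev_time_triple.
      unfold S. field. split; lra. }
  assert (HGM : forall t, 0 <= t <= T -> Rabs (Gf a b Ln (u t)) <= M).
  { intros t0 ht0. pose proof (Huw t0 ht0). unfold M, Mc.
    apply (G_bound a b Ln vlo vhi C); auto; lra. }
  assert (HuL : forall x y, 0 <= x <= T -> 0 <= y <= T -> Rabs (u x - u y) <= M * Rabs (x - y)).
  { apply (deriv_lip u (fun t => Gf a b Ln (u t)) T M); auto. }
  assert (Hcore : forall j, S j <= T -> Good j /\ vlo + r/2 <= V j <= V 0%nat /\
                    Rabs (V j - u (S j)) <= eps*Z).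
  { intros j hj. assert (HS0T : S 0%nat <= T) by (pose proof (mono0 S Hmon j); lra).
    assert (HE0 : Rabs (V 0%nat - u (S 0%nat)) <= eps*E0c).
    { rewrite HV0.
      replace (v0 * (1 - eps * a v0) - u (S 0%nat)) with (- (eps * a v0 * v0) + (u 0 - u (S 0%nat)))
        by (rewrite <- Hv0; ring).
      eapply Rle_trans; [apply Rabs_triang|]. rewrite Rabs_Ropp.
      assert (X1 : Rabs (eps * a v0 * v0) <= eps * C * vhi).
      { rewrite Rabs_right by (apply Rle_ge; repeat apply Rmult_le_pos; lra).
        destruct (Hba' v0) as [_ hC]; [lra|].
        apply Rmult_le_compat; try lra. apply Rmult_le_pos; lra.
        apply Rmult_le_compat_l; lra. }
      assert (X2 : Rabs (u 0 - u (S 0%nat)) <= M * (eps * Ln / vlo)).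
      { eapply Rle_trans; [apply HuL; lra|]. apply Rmult_le_compat_l; [lra|].
        rewrite Rabs_left1 by lra.
        assert (eps*Ln/v0 <= eps*Ln/vlo).
        { unfold Rdiv. apply Rmult_le_compat_l; [nra| apply Rinv_le_contravar; lra]. }
        lra. }
      unfold E0c. replace (eps * (C * vhi + M * Ln / vlo)) with (eps*C*vhi + M * (eps*Ln/vlo))
        by (field; lra). lra. }
    destruct (core a b Ln vlo vhi r Lc C T u eps V S Good (eps*E0c) HLn Hvlo Hr HLc HC HT
       Hlipa' Hlipb' Hba' Hbb' Hu Huw heps heC heCv HG0 (proj1 HS0b) HS0T HE0) with (j := j)
       as [G1 [G2 G3]]; auto.
    { fold C1 K. replace ((eps * E0c + C1 * eps * T) * exp (K * T)) with (eps*Z) by (unfold Z; ring).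
      auto. }
    split; auto; split; auto. fold C1 K in G3.
    eapply Rle_trans; [exact G3|].
    pose proof (mono0 S Hmon j).
    replace (eps * Z) with ((eps * E0c + C1 * eps * T) * exp (K * T)) by (unfold Z; ring).
    apply Rmult_le_compat.
    - assert (0 <= C1*eps*(S j - S 0%nat)) by (apply Rmult_le_pos; [apply Rmult_le_pos|]; lra). nra.
    - left; apply exp_pos.
    - apply Rplus_le_compat_l. apply Rmult_le_compat_l; [apply Rmult_le_pos; lra| lra].
    - destruct (Rle_lt_or_eq_dec (K * (S j - S 0%nat)) (K*T)).
      + apply Rmult_le_compat_l; lra.
      + left; apply exp_increasing; auto.
      + right; f_equal; auto. }
  assert (Hpair : forall j, S j <= T ->
    vlo <= V j * (1 - eps * b (V j)) /\ V j * (1 - eps * b (V j)) <= V j /\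
    Rabs (V j * (1 - eps * b (V j)) - V j) <= eps*C*vhi /\
    vlo + r/2 <= V j <= v0 /\ Rabs (V j - u (S j)) <= eps*Z /\
    ev (Datatypes.S (2*j+1))%nat = (ev_time (ev (2*j+1)%nat) + Ln / V j, W2f a1 a2 e pos,
                            Pnf pos (V j * (1 - eps * b (V j)))) /\
    ev (Datatypes.S (Datatypes.S (2*j+1)))%nat = (ev_time (ev (2*j+1)%nat) + Ln / V j
          + Ln / (V j * (1 - eps * b (V j))), W1f a1 a2 e pos,
          Pf pos (V j * (1 - eps * b (V j)) * (1 - eps * a (V j * (1 - eps * b (V j))))))).
  { intros j hj. destruct (Hcore j hj) as [Gj [[h1 h2] h3]].
    set (v := V j) in *.
    set (v' := v * (1 - eps * b v)).
    assert (hvw : vlo <= v <= vhi) by lra.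
    destruct (Hbb' v hvw) as [Hbv HbvC].
    assert (X : eps * b v * v <= eps * C * vhi).
    { apply Rmult_le_compat; try lra. apply Rmult_le_pos; lra. apply Rmult_le_compat_l; lra. }
    assert (Hv'v : v' <= v) by (unfold v'; assert (0 <= eps * b v) by (apply Rmult_le_pos; lra); nra).
    assert (Hv'lo : vlo <= v') by (unfold v'; nra).
    destruct (Hmode v) as [m1 m2]; [lra|].
    destruct (Hmode v') as [m3 m4]; [lra|].
    destruct (pair_gen a1 a2 hO c1 c2 c3 eps e pos (ev_time (ev (2*j+1)%nat)) v Ha1 Ha2
        ltac:(lra) m1 m2 ltac:(fold b v'; lra) m3 m4) as [P1 P2].
    fold b v' in P1, P2. fold a in P2. fold Ln in P1, P2.
    unfold Good in Gj. fold v in Gj.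
    split; [auto|]. split; [auto|]. split.
    { unfold v'. replace (v * (1 - eps * b v) - v) with (- (eps * b v * v)) by ring.
      rewrite Rabs_Ropp, Rabs_right; [lra|]. apply Rle_ge; repeat apply Rmult_le_pos; lra. }
    split; [lra|]. split; [auto|]. split.
    - change (ev (Datatypes.S (2*j+1))%nat) with (step a1 a2 hO c1 c2 c3 eps (ev (2*j+1)%nat)).
      rewrite Gj. exact P1.
    - change (ev (Datatypes.S (Datatypes.S (2*j+1)))%nat) with
        (step a1 a2 hO c1 c2 c3 eps (step a1 a2 hO c1 c2 c3 eps (ev (2*j+1)%nat))).
      rewrite Gj. exact P2. }
  assert (Hex : exists j, S j > T).
  { destruct (excluded_middle_informative (exists j, S j > T)) as [H|H]; auto.
    exfalso.
    assert (Hall : forall j, S j <= T).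
    { intros j. destruct (Rle_lt_dec (S j) T); auto. exfalso; apply H; exists j; lra. }
    assert (Hlow : forall j, INR j * (eps*Ln/vhi) <= S j).
    { induction j.
      - simpl. lra.
      - rewrite S_INR.
        destruct (Hpair j (Hall j)) as [_ [_ [_ [[h1 h2] [_ [_ P2]]]]]].
        assert (E : S (Datatypes.S j) = eps * ev_time (ev (Datatypes.S (Datatypes.S (2*j+1))))).
        { unfold S. f_equal. f_equal. f_equal. lia. }
        rewrite E, P2, ev_time_triple.
        assert (eps*Ln/vhi <= eps * (Ln / V j)).
        { unfold Rdiv. rewrite Rmult_assoc. apply Rmult_le_compat_l; [lra|].
          apply Rmult_le_compat_l; [lra|]. apply Rinv_le_contravar; lra. }
        assert (0 < eps * (Ln / (V j * (1 - eps * b (V j))))).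
        { apply Rmult_lt_0_compat; [lra|]. apply Rdiv_lt_0_compat; [lra|].
          destruct (Hpair j (Hall j)) as [hh _]. lra. }
        unfold S in IHj. nra. }
    destruct (INR_archimed (eps*Ln/vhi) T) as [n Hn].
    { apply Rdiv_lt_0_compat; nra. }
    specialize (Hlow n). specialize (Hall n). lra. }
  destruct Hex as [jN HjN].
  assert (Hcross : exists k, ev_time (ev k) <= t/eps < ev_time (ev (Datatypes.S k))).
  { apply (crossing (fun k => ev_time (ev k)) (t/eps)) with (N := (2*jN+1)%nat).
    - unfold ev_time; simpl. apply dpos; lra.
    - unfold S in HjN. apply (Rmult_lt_reg_l eps); [lra|].
      replace (eps * (t/eps)) with t by (field; lra). lra. }
  destruct (traj_energy a1 a2 hO c1 c2 c3 eps (q0,p0) (t/eps) Hcross) as [k [[Hk1 Hk2] Hen]].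
  rewrite Hen.
  assert (HsT : Hs t = (u t)^2/2).
  { unfold u. rewrite pow2_sqrt; [field| pose proof (Hpos t ht); lra]. }
  rewrite HsT. fold ev in Hk1, Hk2 |- *.
  assert (Hk1' : eps * ev_time (ev k) <= t).
  { apply (Rmult_le_compat_l eps) in Hk1; [|lra]. replace (eps * (t/eps)) with t in Hk1 by (field; lra). lra. }
  assert (Hk2' : t < eps * ev_time (ev (Datatypes.S k))).
  { apply (Rmult_lt_compat_l eps) in Hk2; [|lra]. replace (eps * (t/eps)) with t in Hk2 by (field; lra). lra. }
  clear Hk1 Hk2 Hen.
  pose proof (Huw0 t ht) as Hut.
  assert (HQ1 : vhi * (eps*Z + M*(2*(eps*Ln/vlo)) + eps*C*vhi) <= eps*Q).
  { unfold Q. replace (M*(2*(eps*Ln/vlo))) with (eps*(2*M*Ln/vlo)) by (field; lra). nra. }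
  assert (HeLn : 0 <= eps*Ln/vlo) by (apply dpos; nra).
  assert (HMe : 0 <= M*(eps*Ln/vlo)) by nra.
  destruct k as [|k'].
  - change (snd (ev 0%nat)) with p0. rewrite <- (pow2_abs p0). fold v0.
    assert (Ht0 : t < eps*Ln/vlo).
    { change (ev 1%nat) with (ev (2*0+1)%nat) in Hk2'. fold (S 0%nat) in Hk2'.
      assert (eps*Ln/v0 <= eps*Ln/vlo).
      { unfold Rdiv. apply Rmult_le_compat_l; [nra| apply Rinv_le_contravar; lra]. }
      lra. }
    eapply Rle_lt_trans; [apply (sq_diff _ _ vhi); lra|].
    rewrite Hv0. eapply Rle_lt_trans; [apply Rmult_le_compat_l; [lra| apply HuL; lra]|].
    rewrite Rminus_0_l, Rabs_Ropp, Rabs_right by lra.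
    assert (M * t <= M*(eps*Ln/vlo)) by (apply Rmult_le_compat_l; lra).
    assert (0 <= eps*Z) by nra.
    assert (0 <= eps*C*vhi) by (repeat apply Rmult_le_pos; lra).
    assert (vhi * (M*t) <= vhi * (eps*Z + M*(2*(eps*Ln/vlo)) + eps*C*vhi))
      by (apply Rmult_le_compat_l; lra).
    lra.
  - assert (Hcase : exists j, (k' = 2*j)%nat \/ (k' = 2*j+1)%nat).
    { destruct (Nat.Even_or_Odd k') as [[j Hj]|[j Hj]]; exists j; lia. }
    destruct Hcase as [j [Hj|Hj]]; subst k'.
    + replace (Datatypes.S (2*j))%nat with (2*j+1)%nat in * by lia.
      assert (HSj : S j <= t) by (unfold S; lra).
      destruct (Hpair j ltac:(lra)) as [_ [_ [_ [[h1 h2] [h3 [P1 _]]]]]].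
      destruct (Hcore j ltac:(lra)) as [Gj _].
      unfold Good in Gj. rewrite Gj. simpl snd. rewrite Pf_sq.
      rewrite P1, ev_time_triple in Hk2'.
      fold (S j) in Hk2'.
      assert (HtS : t - S j <= eps*Ln/vlo).
      { assert (eps*(Ln/V j) <= eps*Ln/vlo).
        { unfold Rdiv. rewrite Rmult_assoc. apply Rmult_le_compat_l; [lra|].
          apply Rmult_le_compat_l; [lra|]. apply Rinv_le_contravar; lra. }
        assert (ES : S j = eps * ev_time (ev (2*j+1)%nat)) by reflexivity.
        rewrite Rmult_plus_distr_l in Hk2'. lra. }
      assert (HS0j := mono0 S Hmon j).
      assert (Hu2 : Rabs (u (S j) - u t) <= M * (eps*Ln/vlo)).
      { eapply Rle_trans; [apply HuL; lra|]. rewrite Rabs_left1 by lra.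
        apply Rmult_le_compat_l; lra. }
      eapply Rle_lt_trans; [apply (sq_diff _ _ vhi); lra|].
      replace (V j - u t) with ((V j - u (S j)) + (u (S j) - u t)) by ring.
      pose proof (Rabs_triang (V j - u (S j)) (u (S j) - u t)).
      assert (0 <= eps*C*vhi) by (repeat apply Rmult_le_pos; lra).
      assert (Rabs (V j - u (S j) + (u (S j) - u t)) <= eps*Z + M*(2*(eps*Ln/vlo)) + eps*C*vhi) by lra.
      assert (vhi * Rabs (V j - u (S j) + (u (S j) - u t)) <=
              vhi * (eps*Z + M*(2*(eps*Ln/vlo)) + eps*C*vhi)) by (apply Rmult_le_compat_l; lra).
      lra.
    + replace (Datatypes.S (2*j+1))%nat with (Datatypes.S (2*j+1))%nat in * by lia.
      assert (HSj : S j <= t).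
      { unfold S. pose proof (event_mono_le a1 a2 hO c1 c2 c3 eps (q0,p0) Ha1 Ha2 Hq0
           (2*j+1)%nat (Datatypes.S (2*j+1)) ltac:(lia)). fold ev in H. nra. }
      destruct (Hpair j ltac:(lra)) as [h0 [h0' [hdiff [[h1 h2] [h3 [P1 P2]]]]]].
      rewrite P1. simpl snd. rewrite Pnf_sq.
      rewrite P2, ev_time_triple in Hk2'.
      fold (S j) in Hk2'.
      set (v' := V j * (1 - eps * b (V j))) in *.
      assert (HtS : t - S j <= 2*(eps*Ln/vlo)).
      { assert (eps*(Ln/V j) <= eps*Ln/vlo).
        { unfold Rdiv. rewrite Rmult_assoc. apply Rmult_le_compat_l; [lra|].
          apply Rmult_le_compat_l; [lra|]. apply Rinv_le_contravar; lra. }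
        assert (eps*(Ln/v') <= eps*Ln/vlo).
        { unfold Rdiv. rewrite Rmult_assoc. apply Rmult_le_compat_l; [lra|].
          apply Rmult_le_compat_l; [lra|]. apply Rinv_le_contravar; lra. }
        assert (ES : S j = eps * ev_time (ev (2*j+1)%nat)) by reflexivity.
        rewrite !Rmult_plus_distr_l in Hk2'. lra. }
      assert (HS0j := mono0 S Hmon j).
      assert (Hu2 : Rabs (u (S j) - u t) <= M * (2*(eps*Ln/vlo))).
      { eapply Rle_trans; [apply HuL; lra|]. rewrite Rabs_left1 by lra.
        apply Rmult_le_compat_l; lra. }
      eapply Rle_lt_trans; [apply (sq_diff _ _ vhi); lra|].
      replace (v' - u t) with ((V j - u (S j)) + (u (S j) - u t) + (v' - V j)) by ring.
      pose proof (Rabs_triang (V j - u (S j) + (u (S j) - u t)) (v' - V j)).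
      pose proof (Rabs_triang (V j - u (S j)) (u (S j) - u t)).
      assert (Rabs (V j - u (S j) + (u (S j) - u t) + (v' - V j)) <= eps*Z + M*(2*(eps*Ln/vlo)) + eps*C*vhi) by lra.
      assert (vhi * Rabs (V j - u (S j) + (u (S j) - u t) + (v' - V j)) <=
              vhi * (eps*Z + M*(2*(eps*Ln/vlo)) + eps*C*vhi)) by (apply Rmult_le_compat_l; lra).
      lra.
Qed.
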